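(* Let $0<p<q<\infty$. Then there does not exist any continuous map $\tau:\mathbb{R}\to\mathbb{R}$ such that for some constant $C>0$, \[ |\tau^{-1}(E)|^{1/q}\le C|E|^{1/p} \] for all Lebesgue measurable sets $E\subset\mathbb{R}$.
   Context: $|\cdot|$ denotes Lebesgue measure on $\mathbb{R}$. *)

(* Defs.v *)
From mathcomp Require Import all_boot all_order all_algebra.
From mathcomp Require Import all_classical all_reals all_analysis.
Set Implicit Arguments. Unset Strict Implicit. Unset Printing Implicit Defensive.
Import Order.TTheory GRing.Theory Num.Theory.
Local Open Scope classical_set_scope.
Local Open Scope ring_scope.

(* This is the sigma-algebra of the completed Lebesgue measure
   (cf. lemma completed_caratheodory_measurable). *)
Definition lebesgue_measurable (R : realType) (E : set R) : Prop :=
  ((@wlength R idfun)^*)%mu.-cara.-measurable E.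

(* |A| : Lebesgue (outer) measure of an arbitrary set A ⊆ R; equals the
   Lebesgue measure on Lebesgue measurable sets. *)
Definition leb (R : realType) (A : set R) : \bar R :=
  @completed_lebesgue_measure R A.

(* Main.v *)
Require Import Defs.
From mathcomp Require Import all_boot all_order all_algebra.
From mathcomp Require Import all_classical all_reals all_analysis.
From mathcomp Require Import ring lra.
Import Order.TTheory GRing.Theory Num.Theory.
Import numFieldNormedType.Exports.
Local Open Scope classical_set_scope.
Local Open Scope ring_scope.

Lemma lebE {R : realType} (A : set R) : leb A = lebesgue_measure A.
Proof. reflexivity. Qed.

Lemma lebE2 {R : realType} (A : set R) : leb A = ((@wlength R idfun)^*)%mu A.
Proof. reflexivity. Qed.

Lemma leb_meas {R : realType} (A : set R) : measurable A -> lebesgue_measurable A.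
Proof. move=> mA. exact: sub_caratheodory. Qed.

Lemma leb_mono {R : realType} (A B : set R) : A `<=` B -> (leb A <= leb B)%E.
Proof. move=> AB; exact: (@le_mu_ext _ _ _ (@wlength R idfun) A B AB). Qed.

Lemma leb_U2 {R : realType} (A B : set R) : (leb (A `|` B) <= leb A + leb B)%E.
Proof. exact: (@outer_measureU2 _ _ ((@wlength R idfun)^*)%mu A B). Qed.

Lemma leb_itv {R : realType} (a h : R) : 0 < h -> leb `]a, a + h] = h%:E.
Proof. move=> h0; rewrite lebE lebesgue_measure_itv /= lte_fin ltrDl h0 -EFinD; congr (_%:E). ring. Qed.

Lemma leb_ball {R : realType} (x d : R) : 0 < d -> leb (ball x d) = (d *+ 2)%:E.
Proof. move=> d0; by rewrite lebE lebesgue_measure_ball // ltW. Qed.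

Lemma leb_ge0 {R : realType} (A : set R) : (0 <= leb A)%E.
Proof. exact: (@mu_ext_ge0 _ _ _ (@wlength R idfun)). Qed.

Lemma piece {R : realType} (tau : R -> R) (C p q : R) : 0 < p -> 0 < q ->
  (forall E : set R, lebesgue_measurable E ->
         (poweR (leb (tau @^-1` E)) q^-1 <= C%:E * poweR (leb E) p^-1)%E) ->
  forall b h : R, 0 < h ->
  (leb (tau @^-1` `]b, (b + h)%R]%classic) <= ((C * h `^ p^-1) `^ q)%:E)%E.
Proof.
move=> p0 q0 H b h h0.
have := H _ (@leb_meas _ _ (measurable_itv `]b, b + h])).
rewrite (leb_itv _ _ h0) poweR_EFin.
have := leb_ge0 (tau @^-1` `]b, b + h]).
case: (leb _) => [r| |] //.
- rewrite poweR_EFin -EFinM !lee_fin => r0 Hr.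
  have -> : r = (r `^ q^-1) `^ q by rewrite -powRrM mulVf ?gt_eqF ?powRr1.
  apply: ge0_ler_powR; rewrite ?nnegrE ?powR_ge0 //.
    exact: ltW.
  have H0 := powR_ge0 r q^-1; exact: (le_trans H0 Hr).
- by move=> _ /=; rewrite invr_eq0 gt_eqF.
Qed.

Lemma leb0 {R : realType} : leb (set0 : set R) = 0%E.
Proof. by rewrite lebE measure0. Qed.

Lemma union_bound {R : realType} (tau : R -> R) (M b h : R) : 0 < h ->
  (forall b' : R, (leb (tau @^-1` `]b', (b' + h)%R]%classic) <= M%:E)%E) ->
  forall n : nat, (leb (tau @^-1` `]b, (b + n%:R * h)%R]%classic) <= (n%:R * M)%:E)%E.
Proof.
move=> h0 HM; elim=> [|n IH].
  rewrite mul0r addr0 mul0r.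
  apply: (@le_trans _ _ (leb set0)); last by rewrite leb0.
  apply: leb_mono.
  by move=> x /=; rewrite in_itv /= => /andP[/lt_le_trans H /H]; rewrite ltxx.
apply: (@le_trans _ _ (leb ((tau @^-1` `]b, (b + n%:R * h)%R]%classic) `|`
   (tau @^-1` `](b + n%:R * h), ((b + n%:R * h) + h)%R]%classic)))).
  have E : b + n.+1%:R * h = b + n%:R * h + h by rewrite -natr1 mulrDl mul1r addrA.
  apply: leb_mono; move=> x /=; rewrite !in_itv /= E => /andP[bx xb].
  have [xn|xn] := leP (tau x) (b + n%:R * h).
    by left; rewrite bx.
  by right; rewrite xb.
apply: (le_trans (leb_U2 _ _)).
rewrite -natr1 mulrDl mul1r EFinD.
by apply: leeD.
Qed.

Theorem proposition5p1 (R : realType) (p q : R) :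
  0 < p -> p < q ->
  ~ (exists (tau : R -> R) (C : R),
       continuous tau /\ 0 < C /\
       forall E : set R, lebesgue_measurable E ->
         (poweR (leb (tau @^-1` E)) q^-1 <= C%:E * poweR (leb E) p^-1)%E).
Proof.
move=> p0 pq [tau [C [ctau [C0 H]]]].
have q0 : 0 < q := lt_trans p0 pq.
set c := tau 0.
have [d d0 Hd] : exists2 d : R, 0 < d & ball 0 d `<=` tau @^-1` ball c (2^-1).
  apply/nbhs_ballP; apply: (ctau 0); apply: nbhsx_ballx.
  by rewrite invr_gt0.
set s := p^-1 * q - 1.
have s0 : 0 < s by rewrite /s subr_gt0 -(mulVf (lt0r_neq0 p0)) ltr_pM2l ?invr_gt0.
set eps := (d *+ 2) / C `^ q.
have eps0 : 0 < eps by rewrite /eps divr_gt0 ?powR_gt0 // mulrn_wgt0.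
set N := (Num.Def.trunc ((eps `^ s^-1)^-1)).+1.
have HN := truncnS_gt ((eps `^ s^-1)^-1); rewrite -/N in HN.
have N0 : 0 < N%:R :> R by rewrite ltr0n.
set h := (N%:R : R)^-1.
have h0 : 0 < h by rewrite invr_gt0.
have Hh : h `^ s < eps.
  have -> : eps = (eps `^ s^-1) `^ s by rewrite -powRrM mulVf ?gt_eqF ?powRr1 // ltW.
  apply: gt0_ltr_powR; rewrite ?nnegrE ?powR_ge0 ?ltW //.
  rewrite /h -[X in _ < X]invrK ltf_pV2 ?posrE ?invr_gt0 ?powR_gt0 //.
set a := c - 2^-1.
have cov : ball 0 d `<=` tau @^-1` `]a, (a + N%:R * h)%R]%classic.
  move=> x /Hd; rewrite /= ball_itv /= !in_itv /= => /andP[l r].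
  rewrite /h mulfV ?gt_eqF // /a; apply/andP; split; first by [].
  by rewrite -addrA; apply: ltW; apply: (lt_le_trans r); rewrite lerD2l; lra.
have B := union_bound tau ((C * h `^ p^-1) `^ q) a h h0 (fun b0 => piece tau C p q p0 q0 H b0 h h0) N.
have := le_trans (leb_mono _ _ cov) B.
rewrite leb_ball // lee_fin.
apply/negP; rewrite -ltNge.
rewrite powRM ?powR_ge0 ?ltW // -powRrM.
have -> : p^-1 * q = s + 1 by rewrite /s subrK.
rewrite powRD; last by apply/implyP => _; exact: lt0r_neq0 h0.
rewrite powRr1; last exact: ltW h0.
have -> : N%:R * (C `^ q * (h `^ s * h)) = C `^ q * h `^ s * (N%:R * h) by ring.
rewrite /h mulfV ?gt_eqF // mulr1.
have -> : d *+ 2 = C `^ q * eps by rewrite /eps mulrC divfK // gt_eqF // powR_gt0.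
by rewrite ltr_pM2l // powR_gt0.
Qed.
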